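(* Let $k_1<k_2$ be positive integers, $M\subseteq\mathbb{N}$ infinite and $\varphi:[M]^{k_1}\to[\mathbb{N}]^{k_2}$ any map. Then there exists an infinite $L\subseteq M$ such that for every plegma pair $(s_1,s_2)$ in $[L]^{k_1}$, neither $(\varphi(s_1),\varphi(s_2))$ nor $(\varphi(s_2),\varphi(s_1))$ is a plegma pair in $[\mathbb{N}]^{k_2}$. In particular there is no infinite $L\subseteq M$ such that $\varphi$ maps every plegma family in $[L]^{k_1}$ to a plegma family in $[\mathbb{N}]^{k_2}$.
   Context: $[M]^k$ is the set of $k$-element subsets of $M$, each $s$ identified with its increasing enumeration $s(1)<\dots<s(k)$. A finite sequence $(s_j)_{j=1}^l$ in $[M]^k$ is a plegma family if $s_1(i)<\dots<s_l(i)$ for every $1\le i\le k$ and $s_l(i)<s_1(i+1)$ for every $1\le i<k$; a plegma pair is a plegma family of length 2. *)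

(* Defs.v *)
From mathcomp Require Import all_boot.
Set Implicit Arguments. Unset Strict Implicit. Unset Printing Implicit Defensive.

Definition infinite_set (L : nat -> Prop) : Prop :=
  forall n : nat, exists m : nat, n <= m /\ L m.

Definition subset_of (L M : nat -> Prop) : Prop := forall x, L x -> M x.

(* [M]^k : a k-element subset of M, identified with its increasing
   enumeration s = [:: s(1); ...; s(k)] (0-based indices in Rocq). *)
Definition in_kset (M : nat -> Prop) (k : nat) (s : seq nat) : Prop :=
  [/\ sorted ltn s, size s = k & forall x, x \in s -> M x].

(* Plegma family (s_1,...,s_l), l >= 1, of k-element sets, as sequences:
   s_1(i) < ... < s_l(i) for each i, and s_l(i) < s_1(i+1) for i < k. *)
Definition plegma_family (k : nat) (F : seq (seq nat)) : Prop :=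
  [/\ 0 < size F,
      forall j i, j.+1 < size F -> i < k ->
        nth 0 (nth [::] F j) i < nth 0 (nth [::] F j.+1) i
    & forall i, i.+1 < k ->
        nth 0 (last [::] F) i < nth 0 (head [::] F) i.+1].

Definition plegma_pair (k : nat) (s t : seq nat) : Prop :=
  plegma_family k [:: s; t].

(* Main.v *)
Require Import Defs.
From mathcomp Require Import all_boot.
From Stdlib Require Import Lia Classical ClassicalEpsilon.
Set Implicit Arguments. Unset Strict Implicit. Unset Printing Implicit Defensive.

Ltac slia := repeat match goal with H: is_true (_ <= _) |- _ => move/leP in H end;
  try apply/leP; try rewrite <- ?plusE, <- ?multE, <- ?minusE in *; lia.
Ltac snia := repeat match goal with H: is_true (_ <= _) |- _ => move/leP in H end;
  try apply/leP; try rewrite <- ?plusE, <- ?multE, <- ?minusE in *; nia.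

Lemma sorted_nth (s : seq nat) :
  sorted ltn s <-> forall i, i.+1 < size s -> nth 0 s i < nth 0 s i.+1.
Proof. split=> [/(sortedP 0) //| H]; exact/(sortedP 0). Qed.

Lemma incr_lt (x : nat -> nat) : (forall n, x n < x n.+1) -> forall i j, i < j -> x i < x j.
Proof.
move=> H i; elim=> // j IH; rewrite ltnS leq_eqVlt => /orP[/eqP->|/IH h]; first exact: H.
exact: ltn_trans h (H j).
Qed.

Lemma incr_ge (x : nat -> nat) : (forall n, x n < x n.+1) -> forall n, n <= x n.
Proof. move=> H; elim=> // n IH; exact: leq_ltn_trans IH (H n). Qed.

Lemma incr_inv (x : nat -> nat) : (forall n, x n < x n.+1) -> forall i j, x i < x j -> i < j.
Proof.
move=> H i j h; rewrite ltnNge; apply/negP => hji.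
move: hji; rewrite leq_eqVlt => /orP[/eqP e|/(incr_lt H) h2].
  by rewrite e ltnn in h.
by move: (ltn_trans h h2); rewrite ltnn.
Qed.

Lemma enum_inf (L : nat -> Prop) : infinite_set L ->
  exists x : nat -> nat, (forall n, L (x n)) /\ (forall n, x n < x n.+1).
Proof.
move=> H.
have nx : forall n, {m | n <= m /\ L m}.
  by move=> n; apply: constructive_indefinite_description; exact: H.
pose f := fix f n := match n with 0 => sval (nx 0) | k.+1 => sval (nx (f k).+1) end.
exists f; split.
- case=> [|n] /=; by case: (nx _) => m [].
- move=> n /=; by case: (nx _) => m [].
Qed.

Lemma mk_in_kset (L : nat -> Prop) (x f : nat -> nat) k :
  (forall n, L (x n)) -> (forall n, x n < x n.+1) -> (forall i, i.+1 < k -> f i < f i.+1) ->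
  in_kset L k (mkseq (fun i => x (f i)) k).
Proof.
move=> HL Hx Hf; split.
- apply/sorted_nth; rewrite size_mkseq => i hi.
  rewrite !nth_mkseq //; last exact: ltnW. exact: incr_lt Hx _ _ (Hf _ hi).
- by rewrite size_mkseq.
- by rewrite /mkseq => y /mapP [i _ ->].
Qed.

Lemma mk_plegma (x f g : nat -> nat) k : (forall n, x n < x n.+1) ->
  (forall i, i < k -> f i < g i) -> (forall i, i.+1 < k -> g i < f i.+1) ->
  plegma_pair k (mkseq (fun i => x (f i)) k) (mkseq (fun i => x (g i)) k).
Proof.
move=> Hx H1 H2; split => //.
- case=> [|j] i //= _ hi. rewrite !nth_mkseq //. exact: incr_lt Hx _ _ (H1 _ hi).
- move=> i hi /=. rewrite !nth_mkseq //; last exact: ltnW. exact: incr_lt Hx _ _ (H2 _ hi).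
Qed.

Definition badp k2 (P Q : seq nat) := plegma_pair k2 P Q \/ plegma_pair k2 Q P.

Lemma bad_shift k2 P Q : sorted ltn P -> size P = k2 -> badp k2 P Q ->
  forall i, i.+1 < k2 -> nth 0 Q i < nth 0 P i.+1.
Proof.
move=> HP hs [[_ _ H3]|[_ H2 _]] i hi.
- exact: H3.
- apply: ltn_trans (H2 0 i _ (ltnW hi)) _ => //. by move/sorted_nth: HP; apply; rewrite hs.
Qed.

Lemma bad_neq0 k2 P Q : 0 < k2 -> badp k2 P Q -> nth 0 P 0 != nth 0 Q 0.
Proof.
move=> hk [[_ H2 _]|[_ H2 _]]; move: (H2 0 0 isT hk) => /= h;
  [by rewrite ltn_eqF | by rewrite eq_sym ltn_eqF].
Qed.

Definition rstep (c : seq nat -> Prop) m (M' : nat -> Prop) (p : nat * (nat -> Prop) * bool) : Prop :=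
  [/\ M' p.1.1, subset_of p.1.2 M', (forall y, p.1.2 y -> p.1.1 < y), infinite_set p.1.2 &
      forall s, in_kset p.1.2 m s -> (c (p.1.1 :: s) <-> p.2 = true)].

Definition rpick c m (M' : nat -> Prop) :=
  epsilon (inhabits (0, M', true)) (fun p => infinite_set M' -> rstep c m M' p).

Fixpoint rst c m (M : nat -> Prop) n : nat -> Prop :=
  match n with 0 => M | n.+1 => (rpick c m (rst c m M n)).1.2 end.

Definition ran c m M n := (rpick c m (rst c m M n)).1.1.
Definition rbn c m M n := (rpick c m (rst c m M n)).2.

Lemma ramsey (m : nat) : forall (c : seq nat -> Prop) (M : nat -> Prop), infinite_set M ->
  exists L b, [/\ subset_of L M, infinite_set L & forall s, in_kset L m s -> (c s <-> b = true)].
Proof.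
elim: m => [|m IH] c M HM.
  case: (classic (c [::])) => h.
    exists M, true; split => // s [_ /size0nil -> _]; by split.
  exists M, false; split => // s [_ /size0nil -> _]; by split.
have step : forall M', infinite_set M' -> exists p, rstep c m M' p.
  move=> M' HM'. case: (HM' 0) => a [_ Ha].
  have HM1 : infinite_set (fun y => M' y /\ a < y).
    move=> n; case: (HM' (maxn n a.+1)) => y [hy My]; exists y; split; last split => //.
    - exact: leq_trans (leq_maxl _ _) hy.
    - exact: leq_trans (leq_maxr _ _) hy.
  case: (IH (fun s => c (a :: s)) _ HM1) => L [b [HL1 HL2 HL3]].
  exists (a, L, b); split => /=.
  - exact: Ha.
  - by move=> y /HL1 [].
  - by move=> y /HL1 [].
  - exact: HL2.
  - exact: HL3.
have pickP : forall M', infinite_set M' -> rstep c m M' (rpick c m M').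
  move=> M' HM'.
  have := @epsilon_spec _ (inhabits (0, M', true)) (fun p => infinite_set M' -> rstep c m M' p).
  case: (step M' HM') => p hp.
  move=> /(_ (ex_intro _ p (fun _ => hp))); apply; exact HM'.
have st_inf : forall n, infinite_set (rst c m M n).
  elim=> [|n IHn] //=. by case: (pickP _ IHn).
pose an := ran c m M.
pose bn := rbn c m M.
have hn : forall n, rstep c m (rst c m M n) (rpick c m (rst c m M n)).
  move=> n; exact: pickP (st_inf n).
have sub : forall n d, subset_of (rst c m M (n + d)) (rst c m M n).
  move=> n; elim=> [|d IHd]; first by rewrite addn0.
  rewrite addnS => y hy; apply: IHd. by case: (hn (n + d)) => _ h _ _ _; apply: h.
have ainc : forall n, an n < an n.+1.
  move=> n; case: (hn n) => _ _ h _ _; apply: h.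
  by case: (hn n.+1).
have [b0 Hb0] : exists b0, forall N, exists n, N <= n /\ bn n = b0.
  case: (classic (forall N, exists n, N <= n /\ bn n = true)) => h; first by exists true.
  case: (not_all_ex_not _ _ h) => N hN.
  exists false => N'. exists (maxn N N'); split; first exact: leq_maxr.
  case e: (bn (maxn N N')) => //. exfalso; apply: hN; exists (maxn N N'); split => //.
  exact: leq_maxl.
exists (fun y => exists n, bn n = b0 /\ y = an n), b0; split.
- move=> y [n [_ ->]]. have := sub 0 n. rewrite add0n => /(_ (an n)); apply.
  by case: (hn n).
- move=> N; case: (Hb0 N) => n [hn1 hn2]; exists (an n); split.
    exact: leq_trans hn1 (incr_ge ainc n).
  by exists n.
- case=> [|y rest] [hs hsz hL]; first by [].
  case: (hL y (mem_head _ _)) => n [hbn ey]; subst y.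
  have hall := order_path_min ltn_trans hs.
  have hr : in_kset (rst c m M n.+1) m rest.
    split; first exact: path_sorted hs.
      by case: hsz.
    move=> z hz.
    have [n' [_ ez]] : exists n', bn n' = b0 /\ z = an n' by apply: hL; rewrite inE hz orbT.
    have hy : an n < z by exact: (allP hall z hz).
    rewrite ez in hy *. have hnn := incr_inv ainc hy.
    have := sub n.+1 (n' - n.+1). rewrite subnKC //; apply.
    by case: (hn n').
  case: (hn n) => _ _ _ _ H. have := H rest hr. by rewrite /bn -hbn.
Qed.

Definition key k1 r i := i * k1.+1 + r.
Definition gi k1 W m r i := if i + r < k1 then key k1 r i else key k1 r i * W + m * r.

Lemma lex a b p q W : a < b -> p < W -> a * W + p < b * W + q.
Proof. move=> h1 h2. snia. Qed.
Lemma lex1 a p q W : p < q -> a * W + p < a * W + q.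
Proof. move=> h1. slia. Qed.
Lemma lex2 x b q W : x < W -> 0 < b -> x < b * W + q.
Proof. move=> h1 h2. snia. Qed.
Lemma pre_lt k1 W r i : k1 * k1.+1 <= W -> i + r < k1 -> key k1 r i < W.
Proof. rewrite /key => h1 h2. snia. Qed.
Lemma key_lt k1 r r' i i' : i * k1.+1 + r < i' * k1.+1 + r' -> key k1 r i < key k1 r' i'.
Proof. by []. Qed.

Section Arith.
Variables (k1 W m : nat).
Hypotheses (hk1 : 0 < k1) (hW1 : k1 * k1.+1 <= W) (hW2 : m * k1 < W).

Lemma mr r : r <= k1 -> m * r < W.
Proof. move=> h; apply: leq_ltn_trans hW2; exact: leq_mul. Qed.

Lemma g_incr r i : r <= k1 -> i.+1 < k1 -> gi k1 W m r i < gi k1 W m r i.+1.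
Proof.
move=> hr hi; rewrite /gi.
case: (ltnP (i + r) k1) => h1; case: (ltnP (i.+1 + r) k1) => h2.
- apply: key_lt; snia.
- apply: lex2; [exact: pre_lt h1| rewrite /key; snia].
- slia.
- apply: lex; [apply: key_lt; snia | exact: mr].
Qed.

Lemma g_step1 r i : r < k1 -> i < k1 -> gi k1 W m r i < gi k1 W m r.+1 i.
Proof.
move=> hr hi; rewrite /gi.
case: (ltnP (i + r) k1) => h1; case: (ltnP (i + r.+1) k1) => h2.
- apply: key_lt; snia.
- apply: lex2; [exact: pre_lt h1| rewrite /key; snia].
- slia.
- apply: lex; [apply: key_lt; snia | exact: mr (ltnW hr)].
Qed.

Lemma g_step2 r i : r < k1 -> i.+1 < k1 -> gi k1 W m r.+1 i < gi k1 W m r i.+1.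
Proof.
move=> hr hi; rewrite /gi.
case: (ltnP (i + r.+1) k1) => h1; case: (ltnP (i.+1 + r) k1) => h2.
- apply: key_lt; snia.
- slia.
- slia.
- apply: lex; [apply: key_lt; snia | exact: mr].
Qed.
End Arith.

Lemma g_t1 k1 W m m' i : 0 < k1 -> m < m' -> gi k1 W m k1 i < gi k1 W m' k1 i.
Proof.
move=> hk hm; rewrite /gi.
case: (ltnP (i + k1) k1) => h1; first slia.
apply: lex1; snia.
Qed.

Lemma g_t2 k1 W m m' i : 0 < k1 -> m' * k1 < W -> gi k1 W m' k1 i < gi k1 W m k1 i.+1.
Proof.
move=> hk hm; rewrite /gi.
case: (ltnP (i + k1) k1) => h1; first slia.
case: (ltnP (i.+1 + k1) k1) => h2; first slia.
apply: lex => //; apply: key_lt; snia.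
Qed.

Lemma allbad k1 k2 (L : nat -> Prop) (phi : seq nat -> seq nat) : 0 < k1 -> k1 < k2 -> infinite_set L ->
  (forall s, in_kset L k1 s -> in_kset (fun _ => True) k2 (phi s)) ->
  (forall s1 s2, in_kset L k1 s1 -> in_kset L k1 s2 -> plegma_pair k1 s1 s2 ->
     badp k2 (phi s1) (phi s2)) -> False.
Proof.
move=> hk1 hk12 HL Hphi Hbad.
case: (enum_inf HL) => x [xL xinc].
pose u0 := mkseq (fun i => x (key k1 0 i)) k1.
pose K := nth 0 (phi u0) k1.
pose N := K.+1.
pose W := (N + k1) * k1.+1.
pose u m r := mkseq (fun i => x (gi k1 W m r i)) k1.
have hW1 : k1 * k1.+1 <= W by rewrite /W leq_mul2r leq_addl orbT.
have hW2 : forall m, m < N -> m * k1 < W by move=> m hm; rewrite /W; snia.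
have uin : forall m r, m < N -> r <= k1 -> in_kset L k1 (u m r).
  move=> m r hm hr; apply: mk_in_kset => // i hi; idtac.
 exact: (@g_incr k1 W m hW1 (hW2 _ hm) r i hr hi).
have u0E : forall m, u m 0 = u0.
  move=> m; apply: (@eq_from_nth _ 0); rewrite !size_mkseq // => i hi.
  by rewrite !nth_mkseq // /gi addn0 hi.
have upl : forall m r, m < N -> r < k1 -> plegma_pair k1 (u m r) (u m r.+1).
  move=> m r hm hr; apply: mk_plegma => // i hi.
  - exact: (@g_step1 k1 W m hW1 (hW2 _ hm) r i hr hi).
  - exact: (@g_step2 k1 W m hW1 (hW2 _ hm) r i hr hi).
have chain : forall m, m < N -> forall r, r <= k1 -> nth 0 (phi (u m r)) (k1 - r) + r <= K.
  move=> m hm; elim=> [|r IH] hr.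
    by rewrite u0E subn0 addn0.
  have hb := Hbad _ _ (uin m r hm (ltnW hr)) (uin m r.+1 hm hr) (upl m r hm hr).
  case: (Hphi _ (uin m r hm (ltnW hr))) => hs hsz _.
  have hi : (k1 - r.+1).+1 < k2 by rewrite subnSK //; slia.
  have := bad_shift hs hsz hb hi. rewrite subnSK // => h.
  move: (IH (ltnW hr)) => h2; rewrite addnS -addSn; apply: leq_trans h2; by rewrite leq_add2r.
pose f m := nth 0 (phi (u m k1)) 0.
have fK : forall m, m < N -> f m < K.
  move=> m hm; have := chain m hm k1 (leqnn _); rewrite subnn /f. move=> h; apply: leq_trans h; by rewrite -addn1 leq_add2l.
have finj : forall m m', m < m' -> m' < N -> f m != f m'.
  move=> m m' hmm hm'.
  apply: bad_neq0 (ltn_trans hk1 hk12) (Hbad _ _ (uin _ _ (ltn_trans hmm hm') (leqnn _)) (uin _ _ hm' (leqnn _)) _).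
  apply: mk_plegma => // i hi.
  - exact: g_t1.
  - exact: g_t2 hk1 (hW2 _ hm').
have : size (map f (iota 0 N)) <= size (iota 0 K).
  apply: uniq_leq_size.
  - rewrite map_inj_in_uniq ?iota_uniq // => a b; rewrite !mem_iota /= !add0n => ha hb e.
    case: (ltngtP a b) => // h; [move: (finj _ _ h hb) | move: (finj _ _ h ha)]; by rewrite e eqxx.
  - move=> y /mapP [a]; rewrite mem_iota add0n => /andP [_ ha] ->.
    rewrite mem_iota add0n /=; exact: fK.
by rewrite size_map !size_iota /N ltnn.
Qed.

Definition ev k (u : seq nat) := mkseq (fun i => nth 0 u (2*i)) k.
Definition od k (u : seq nat) := mkseq (fun i => nth 0 u (2*i).+1) k.

Lemma interleave (L : nat -> Prop) k s1 s2 : in_kset L k s1 -> in_kset L k s2 ->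
  plegma_pair k s1 s2 -> exists u, [/\ in_kset L (2*k) u, ev k u = s1 & od k u = s2].
Proof.
move=> [h1 z1 m1] [h2 z2 m2] [_ P2 P3].
exists (mkseq (fun j => if odd j then nth 0 s2 j./2 else nth 0 s1 j./2) (2*k)); split.
- split; last 1 first.
  + move=> y /mapP [j]; rewrite mem_iota add0n => /andP [_ hj] ->.
    have hh : j./2 < k by have := odd_double_half j; rewrite -addnn => e; slia.
    case: ifP => _; [apply: m2|apply: m1]; apply: mem_nth; rewrite ?z1 ?z2 //.
  + apply/sorted_nth; rewrite size_mkseq => j hj. rewrite !nth_mkseq //; last exact: ltnW.
    rewrite /= uphalf_half. have := odd_double_half j. case: (odd j) => /= hj2.
    * apply: P3. rewrite -addnn in hj2. slia.
    * rewrite add0n. apply: (P2 0 (j./2) isT). rewrite -addnn add0n in hj2. slia.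
  + by rewrite size_mkseq.
- apply: (@eq_from_nth _ 0); rewrite size_mkseq ?z1 // => i hi.
  rewrite nth_mkseq // nth_mkseq; last slia.
  by rewrite mul2n odd_double half_double.
- apply: (@eq_from_nth _ 0); rewrite size_mkseq ?z2 // => i hi.
  rewrite nth_mkseq // nth_mkseq; last slia.
  by rewrite /= mul2n odd_double uphalf_double.
Qed.

Lemma part1 (k1 k2 : nat) (M : nat -> Prop) (phi : seq nat -> seq nat) :
  0 < k1 -> k1 < k2 -> infinite_set M ->
  (forall s, in_kset M k1 s -> in_kset (fun _ => True) k2 (phi s)) ->
  exists L : nat -> Prop,
      [/\ subset_of L M, infinite_set L &
        forall s1 s2, in_kset L k1 s1 -> in_kset L k1 s2 ->
          plegma_pair k1 s1 s2 ->
          ~ plegma_pair k2 (phi s1) (phi s2) /\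
          ~ plegma_pair k2 (phi s2) (phi s1)].
Proof.
move=> hk1 hk12 HM Hphi.
pose c u := badp k2 (phi (ev k1 u)) (phi (od k1 u)).
case: (ramsey (2*k1) c HM) => L [b [HLM HL Hc]].
have Hphi' : forall s, in_kset L k1 s -> in_kset (fun _ => True) k2 (phi s).
  move=> s [a b' d]; apply: Hphi; split => // y /d; exact: HLM.
case: b Hc => Hc.
- exfalso; apply: (allbad hk1 hk12 HL Hphi') => s1 s2 h1 h2 hp.
  case: (interleave h1 h2 hp) => u [hu e1 e2].
  have := proj2 (Hc u hu) erefl. by rewrite /c e1 e2.
- exists L; split => // s1 s2 h1 h2 hp.
  case: (interleave h1 h2 hp) => u [hu e1 e2].
  have h := Hc u hu.
  split => hpp; suff: false = true by []; apply/h; rewrite /c e1 e2; [left|right]; exact: hpp.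
Qed.

Theorem mainTheorem3 (k1 k2 : nat) (M : nat -> Prop)
    (phi : seq nat -> seq nat) :
  0 < k1 -> k1 < k2 -> infinite_set M ->
  (forall s, in_kset M k1 s -> in_kset (fun _ => True) k2 (phi s)) ->
  (exists L : nat -> Prop,
      [/\ subset_of L M, infinite_set L &
        forall s1 s2, in_kset L k1 s1 -> in_kset L k1 s2 ->
          plegma_pair k1 s1 s2 ->
          ~ plegma_pair k2 (phi s1) (phi s2) /\
          ~ plegma_pair k2 (phi s2) (phi s1)])
  /\
  ~ (exists L : nat -> Prop,
      [/\ subset_of L M, infinite_set L &
        forall F : seq (seq nat),
          (forall s, s \in F -> in_kset L k1 s) ->
          plegma_family k1 F -> plegma_family k2 (map phi F)]).
Proof.
move=> hk1 hk12 HM Hphi; split; first exact: part1.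
case=> L [HLM HL HF].
have Hphi' : forall s, in_kset L k1 s -> in_kset (fun _ => True) k2 (phi s).
  move=> s [a b' d]; apply: Hphi; split => // y /d; exact: HLM.
case: (part1 hk1 hk12 HL Hphi') => L' [HL'L HL' H'].
case: (enum_inf HL') => x [xL xinc].
have h1 : in_kset L' k1 (mkseq (fun i => x (2 * i)) k1).
  apply: mk_in_kset => // i _; slia.
have h2 : in_kset L' k1 (mkseq (fun i => x (2 * i).+1) k1).
  apply: mk_in_kset => // i _; slia.
have hp : plegma_pair k1 (mkseq (fun i => x (2 * i)) k1) (mkseq (fun i => x (2 * i).+1) k1).
  apply: mk_plegma => // i _; slia.
have hsub : forall s, in_kset L' k1 s -> in_kset L k1 s.
  move=> s [a b' d]; split => // y /d; exact: HL'L.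
case: (H' _ _ h1 h2 hp) => nh _; apply: nh.
apply: (HF [:: mkseq (fun i => x (2 * i)) k1; mkseq (fun i => x (2 * i).+1) k1]) => //.
move=> s; rewrite !inE => /orP [/eqP -> | /eqP ->]; exact: hsub.
Qed.
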